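(* Let $R$ be a commutative ring with $1$, $A\in M_n(R)$ and $B=\mathrm{diag}(b_1,\dots,b_n)$ with $b_i\in R$. Then $$T(A,B)=(-1)^{\lfloor n/2\rfloor}\,\Delta(A)\,\delta(b_1,\dots,b_n)^n.$$
   Context: $M(A,B)\in M_{n^2}(R)$ is the block matrix of $n\times n$ blocks whose $(i,j)$-th block is $A^{j-1}B^{i-1}$ ($i,j=1,\dots,n$), and $T(A,B)=\det M(A,B)$. For $A\in M_n(R)$ and $t\in\{1,\dots,n\}$, $M_t(A)$ is the $n\times n$ matrix whose $j$-th column is the $t$-th column of $A^{j-1}$ ($j=1,\dots,n$, $A^0=I$); $\Delta_t(A)=\det M_t(A)$ and $\Delta(A)=\prod_{t=1}^n\Delta_t(A)$. $\delta(x_1,\dots,x_n)=\prod_{s<t}(x_t-x_s)$ is the Vandermonde determinant. *)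

(* Defs.v *)
From mathcomp Require Import all_boot all_order all_algebra.
Set Implicit Arguments. Unset Strict Implicit. Unset Printing Implicit Defensive.
Import GRing.Theory.
Local Open Scope ring_scope.

(* Block matrix with (i,j)-th block (0-based) A^j * B^i, i.e. the (i+1,j+1)
   block A^{(j+1)-1} B^{(i+1)-1} of the paper; built with mathcomp's \mxblock,
   so it is a square matrix of size \sum_(i < n) n = n^2. *)
Definition Mblock (R : comNzRingType) (n : nat) (A B : 'M[R]_n) :=
  \mxblock_(i < n, j < n) (A ^+ j *m B ^+ i).

Definition Tdet (R : comNzRingType) (n : nat) (A B : 'M[R]_n) : R :=
  \det (Mblock A B).

Definition Mt (R : comNzRingType) (n : nat) (A : 'M[R]_n) (t : 'I_n) : 'M[R]_n :=
  \matrix_(i < n, j < n) (A ^+ j) i t.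

Definition Delta_t (R : comNzRingType) (n : nat) (A : 'M[R]_n) (t : 'I_n) : R :=
  \det (Mt A t).

Definition Delta (R : comNzRingType) (n : nat) (A : 'M[R]_n) : R :=
  \prod_(t < n) Delta_t A t.

Definition vdm (R : comNzRingType) (n : nat) (x : 'I_n -> R) : R :=
  \prod_(t < n) \prod_(s < n | (s < t)%N) (x t - x s).

(* Main.v *)
Require Import Defs.
From mathcomp Require Import all_boot all_order all_algebra all_fingroup.
Set Implicit Arguments. Unset Strict Implicit. Unset Printing Implicit Defensive.
Import GRing.Theory.
Local Open Scope ring_scope.


Lemma odd_perm_invol_aux (T : finType) k (s : {perm T}) : (forall x, s (s x) = x) ->
  #|[pred x | s x != x]| = k -> odd_perm s = odd k./2.
Proof.
elim/ltn_ind: k s => k IH s sK ek.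
case: (pickP [pred x | s x != x]) => [x /= hx | h0]; last first.
  rewrite -ek (eq_card0 h0).
  have -> : s = 1%g by apply/permP => z; rewrite perm1; apply/eqP; have := h0 z; rewrite /= => /negbFE.
  by rewrite odd_perm1.
set y := s x.
have sy : s y = x by rewrite sK.
have xy : x != y by rewrite eq_sym.
set t := (tperm x y * s)%g.
have tE z : t z = s (tperm x y z) by rewrite permM.
have tK z : t (t z) = z.
  rewrite !tE; case: (tpermP x y z) => [->|->|zx zy].
  - by rewrite sy tpermL sy.
  - by rewrite tpermR.
  have h1 : x != s z.
    by apply/eqP => e; apply: zy; rewrite -[z]sK -e.
  have h2 : y != s z.
    by apply/eqP => e; apply: zx; rewrite -[z]sK -e sy.
  by rewrite tpermD ?sK.
have ptE : [pred z | t z != z] =i [predD1 [predD1 [pred z | s z != z] & x] & y].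
  move=> z; rewrite !inE tE; case: (tpermP x y z) => [->|->|zx zy].
  - by rewrite sy eqxx /= andbF.
  - by rewrite eqxx.
  by rewrite (introF eqP zx) (introF eqP zy).
have ck : k = (#|[pred z | t z != z]|).+2.
  rewrite (eq_card ptE) -ek [in LHS](cardD1 x) !inE /= hx add1n; congr _.+1.
  rewrite [in LHS](cardD1 y) !inE /= sy eq_sym xy add1n.
  by [].
have -> : s = (tperm x y * t)%g by rewrite /t mulgA tperm2 mul1g.
rewrite odd_permM odd_tperm xy (IH _ _ t tK erefl); last by rewrite ck.
by rewrite ck.
Qed.


Lemma det_castmx (R : comNzRingType) m1 m2 (e : m1 = m2) (X : 'M[R]_m1) :
  \det (castmx (e, e) X) = \det X.
Proof. by case: m2 / e; rewrite castmx_id. Qed.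

Lemma det_mxdiag (R : comNzRingType) m (p_ : 'I_m -> nat) (B_ : forall i, 'M[R]_(p_ i)) :
  \det (\mxdiag_i B_ i) = \prod_i \det (B_ i).
Proof.
elim: m p_ B_ => [|m IH] p_ B_.
  have h : forall k (e : k = 0%N) (X : 'M[R]_k), \det X = 1.
    by move=> k e; rewrite e => X; exact: det_mx00.
  by rewrite (h _ (big_ord0 _ _ _ _)) [RHS]big_ord0.
by rewrite mxdiag_recl det_castmx det_ublock IH big_ord_recl.
Qed.

Section S.
Variable n : nat.
Local Notation pn := (fun _ : 'I_n => n).
Local Notation N := (\sum_(i < n) pn i)%N.
Definition s1 (k : 'I_N) : 'I_n := @tagnat.sig1 n pn k.
Definition s2 (k : 'I_N) : 'I_n := @tagnat.sig2 n pn k.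
Definition rk (i j : 'I_n) : 'I_N := @tagnat.Rank n pn i j.
Lemma s1rk i j : s1 (rk i j) = i. Proof. exact: tagnat.Rank1K. Qed.
Lemma s2rk i j : s2 (rk i j) = j.
Proof. apply: val_inj; rewrite /s2 /rk tagnat.Rank2K //. Qed.
Lemma rks k : rk (s1 k) (s2 k) = k. Proof. exact: tagnat.sig2K. Qed.

Definition swf (k : 'I_N) : 'I_N := rk (s2 k) (s1 k).
Lemma swfK : involutive swf.
Proof. by move=> k; rewrite /swf s1rk s2rk rks. Qed.
Definition sw : 'S_N := perm (can_inj swfK).
Lemma swE k : sw k = rk (s2 k) (s1 k). Proof. by rewrite permE. Qed.

Lemma mxdiagE (R : comNzRingType) (C : 'I_n -> 'M[R]_n) k l :
  (\mxdiag_(i < n) C i : 'M[R]_N) k l = if s1 k == s1 l then C (s1 k) (s2 k) (s2 l) else 0.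
Proof.
rewrite /mxdiag mxE /s1 /s2; case: eqP => _; last by rewrite mxE.
by rewrite conform_mx_id.
Qed.

Lemma MblockE (R : comNzRingType) (A B : 'M[R]_n) k l :
  Mblock A B k l = (A ^+ s1 l *m B ^+ s1 k) (s2 k) (s2 l).
Proof. by rewrite /Mblock mxE. Qed.

Lemma diagpowE (R : comNzRingType) (A : 'M[R]_n) (b : 'I_n -> R) i r c :
  (A *m diag_mx (\row_j b j) ^+ i) r c = A r c * b c ^+ i.
Proof.
elim: i A => [|i IH] A; first by rewrite expr0 mulmx1 expr0 mulr1.
by rewrite exprSr mulmxE mulrA -mulmxE mul_mx_diag mxE IH mxE exprSr mulrA.
Qed.

Section Main.
Variables (R : comNzRingType) (A : 'M[R]_n) (b : 'I_n -> R).
Definition Pm : 'M[R]_N := \matrix_(k, l) (b (s1 l) ^+ s1 k * (s2 k == s2 l)%:R).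
Definition Qm : 'M[R]_N := \mxdiag_(c < n) Mt A c.

Lemma claim1 : col_perm sw (Mblock A (diag_mx (\row_i b i))) = Pm *m Qm.
Proof.
apply/matrixP => k l; rewrite [LHS]mxE MblockE swE s1rk s2rk diagpowE !mxE.
rewrite (bigD1 (rk (s1 l) (s2 k))) //= [X in _ + X]big1 ?addr0.
  by rewrite /Qm mxdiagE !mxE s1rk s2rk !eqxx mulr1 mulrC.
move=> m hm; rewrite /Qm mxdiagE !mxE.
case: eqP => e2; last by rewrite mulr0 mul0r.
case: eqP => e1; last by rewrite mulr0.
by move: hm; rewrite -(rks m) -e1 -e2 eqxx.
Qed.

Lemma claim2 : row_perm sw (col_perm sw Pm) = \mxdiag_(r < n) Vandermonde n (\row_i b i).
Proof.
apply/matrixP => k l; rewrite mxdiagE. rewrite !mxE. rewrite !swE !s1rk !s2rk .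
by case: eqP => _; rewrite ?mulr1 ?mulr0.
Qed.
End Main.

Lemma card_sw : #|[pred x | sw x != x]| = (n * n - n)%N.
Proof.
have hN : #|'I_N| = (n * n)%N by rewrite card_ord sum_nat_const card_ord.
have hfix : #|[pred x | sw x == x]| = n.
  have inj : injective (fun i => rk i i).
    by move=> i j e; have := congr1 s1 e; rewrite !s1rk.
  rewrite -[RHS](card_ord n) -(card_imset _ inj).
  apply: eq_card => x; rewrite !inE swE.
  apply/eqP/imsetP => [e|[i _ ->]]; last by rewrite s1rk s2rk.
  exists (s1 x) => //; have h := congr1 s2 e; rewrite s2rk in h.
  by rewrite -{1}(rks x) -h.
have hC : #|[predC [pred x | sw x != x]]| = n.
  by apply: etrans hfix; apply: eq_card => x; rewrite !inE negbK.
have := cardC [pred x | sw x != x]; rewrite hC hN => <-.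
by rewrite addnK.
Qed.

Lemma oddbin2 m : odd 'C(m,2) = odd m./2.
Proof.
elim/ltn_ind: m => -[|[|m]] IH //.
rewrite !binS bin1 bin0 /= -(IH m) // addn1 !oddD /=.
by case: (odd 'C(m,2)); case: (odd m).
Qed.

Lemma odd_sw : odd_perm sw = odd n./2.
Proof.
rewrite (odd_perm_invol_aux (k := (n * n - n)%N)) ?card_sw //; last first.
  by move=> x; rewrite !swE !s1rk !s2rk rks.
by rewrite -[in RHS]oddbin2 bin2 -subn1 mulnBr muln1.
Qed.
End S.

Theorem mainTheorem3 (R : comNzRingType) (n : nat) (A : 'M[R]_n) (b : 'I_n -> R) :
  Tdet A (diag_mx (\row_i b i)) =
    (-1) ^+ (n./2) * Delta A * vdm b ^+ n.
Proof.
set sg : R := (-1) ^+ (odd_perm (sw n)).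
have sg2 : sg * sg = 1 by rewrite /sg -signr_addb addbb.
have h1 : Tdet A (diag_mx (\row_i b i)) * sg = \det (Pm b) * \det (Qm A).
  by rewrite -det_mulmx -claim1 col_permE det_mulmx det_perm odd_permV.
have h2 : \det (Pm b) = \det (Vandermonde n (\row_i b i)) ^+ n.
  have := congr1 determinant (claim2 b).
  rewrite row_permE col_permE !det_mulmx !det_perm odd_permV det_mxdiag prodr_const card_ord.
  by move=> <-; rewrite mulrCA -signr_addb addbb mulr1.
have hQ : \det (Qm A) = Delta A by rewrite /Qm det_mxdiag.
have hV : \det (Vandermonde n (\row_i b i)) = vdm b.
  rewrite det_Vandermonde /vdm (exchange_big_dep xpredT) //=.
  by apply: eq_bigr => t _; apply: eq_bigr => s _; rewrite !mxE.
have hs : sg = (-1) ^+ (n./2) by rewrite /sg odd_sw signr_odd.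
have -> : Tdet A (diag_mx (\row_i b i)) = Tdet A (diag_mx (\row_i b i)) * sg * sg.
  by rewrite -mulrA sg2 mulr1.
rewrite h1 h2 hQ hV hs.
by rewrite mulrC [vdm b ^+ n * _]mulrC mulrA.
Qed.
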